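(* Let $m\ge 1$ and let $P_m(z)=\sum_{j=0}^m p_jz^j$ with $p_j=\frac{(2m-j)!}{j!(m-j)!}$. For every $\theta\in[-\pi,\pi]$, all zeros (in $z$) of the polynomial $M_m(\theta,z)=P_m(z)-e^{\mathrm{i}\theta}P_m(-z)$ are purely imaginary, i.e. lie on the imaginary axis $\{\operatorname{Re}z=0\}$.
   Context: $P_m(z)/P_m(-z)$ is the $(m,m)$-Padé approximant of $e^z$ (the stability function of the $m$-stage Gauss Runge–Kutta method). *)

(* Defs.v *)
From HB Require Import structures.
From mathcomp Require Import all_boot all_order all_algebra.
From mathcomp Require Import all_classical all_reals.
From mathcomp Require Import trigo.
From mathcomp Require Import complex.
Set Implicit Arguments. Unset Strict Implicit. Unset Printing Implicit Defensive.
Import Order.TTheory GRing.Theory Num.Theory.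
Local Open Scope ring_scope.
Local Open Scope complex_scope.

Definition pade_coef (R : realType) (m j : nat) : R[i] :=
  ((2 * m - j)`!)%:R / ((j`!)%:R * ((m - j)`!)%:R).

Definition Pm (R : realType) (m : nat) : {poly R[i]} :=
  \poly_(j < m.+1) pade_coef R m j.

Definition expi (R : realType) (t : R) : R[i] := (cos t)%:C + 'i * (sin t)%:C.

Definition Mm (R : realType) (m : nat) (t : R) (z : R[i]) : R[i] :=
  (Pm R m).[z] - expi t * (Pm R m).[- z].

(* Main.v *)
Require Import Defs.
From HB Require Import structures.
From mathcomp Require Import all_boot all_order all_algebra.
From mathcomp Require Import all_classical all_reals.
From mathcomp Require Import trigo.
From mathcomp Require Import complex.
From mathcomp Require Import ring lra zify.
Import Order.TTheory GRing.Theory Num.Theory.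
Local Open Scope ring_scope.
Local Open Scope complex_scope.

Local Notation cRe := complex.Re.
Local Notation cIm := complex.Im.

Section S.
Variable R : realType.
Definition n2 (x : R[i]) : R := cRe x ^+ 2 + cIm x ^+ 2.

Lemma n2M (x y : R[i]) : n2 (x * y) = n2 x * n2 y.
Proof. case: x => a b; case: y => c d; rewrite /n2 /=. ring. Qed.

Lemma n2_expi (t : R) : n2 (expi t) = 1.
Proof. rewrite /n2 /expi /= -[RHS](cos2Dsin2 t). ring. Qed.

Lemma ReV (u : R[i]) : cRe (u^-1) = cRe u / n2 u.
Proof. case: u => a b; rewrite /n2 /=. done. Qed.

Lemma n2_gt0 (u : R[i]) : 0 < cRe u -> 0 < n2 u.
Proof. move=> h; rewrite /n2. nra. Qed.

Lemma n2_ge0 (u : R[i]) : 0 <= n2 u.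
Proof. rewrite /n2. nra. Qed.

Lemma ReV_ge0 (u : R[i]) : 0 <= cRe u -> 0 <= cRe (u^-1).
Proof. move=> h; rewrite ReV; apply: divr_ge0 => //; exact: n2_ge0. Qed.

Lemma ReV_gt0 (u : R[i]) : 0 < cRe u -> 0 < cRe (u^-1).
Proof. move=> h; rewrite ReV; apply: divr_gt0 => //; exact: n2_gt0. Qed.

Lemma Re_natM (k : nat) (u : R[i]) : cRe (k%:R * u) = k%:R * cRe u.
Proof. by rewrite mulr_natl raddfMn /= mulr_natl. Qed.
Local Notation C := (R[i]).
Local Notation q := (pade_coef R).
Local Notation F k := ((k)`!%:R : C).

Lemma F_neq0 k : F k != 0.
Proof. by rewrite pnatr_eq0 -lt0n fact_gt0. Qed.

Lemma natS_C k : (k.+1%:R : C) = k%:R + 1.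
Proof. by rewrite -addn1 natrD. Qed.

Ltac nz := repeat (apply/andP; split); rewrite -?natS_C ?pnatr_eq0 ?F_neq0 -?lt0n ?fact_gt0 //.

Lemma pade_rec n : Pm R n.+2 = (2*(2*n+3))%:R *: Pm R n.+1 + 'X^2 * Pm R n.
Proof.
apply/polyP => j; rewrite coefD coefZ coefXnM !coef_poly.
case: j => [|[|j]].
- rewrite /= /q /pade_coef !subn0 /=.
  have -> : (2 * n.+2 = (2*n+2).+2)%N by lia.
  have -> : (2 * n.+1 = (2*n+2))%N by lia.
  rewrite !factS !natrM.
  rewrite !natS_C. field. nz.
- rewrite /= /q /pade_coef /=.
  have -> : (2 * n.+2 - 1 = (2*n+1).+2)%N by lia.
  have -> : (2 * n.+1 - 1 = (2*n+1))%N by lia.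
  have -> : (n.+2 - 1 = n.+1)%N by lia.
  have -> : (n.+1 - 1 = n)%N by lia.
  rewrite !factS !natrM !natS_C. field. nz.
- rewrite /q /pade_coef /=.
  have -> : (j.+2 - 2 = j)%N by lia.
  case: (ltngtP j n) => hj.
  + have [k ->] : exists k, n = (j + k.+1)%N by exists (n - j.+1)%N; lia.
    rewrite (_ : (j.+2 < (j + k.+1).+3)%N = true); last by lia.
    rewrite (_ : (j.+2 < (j + k.+1).+2)%N = true); last by lia.
    rewrite (_ : (j < (j + k.+1).+1)%N = true); last by lia.
    have -> : (2 * (j + k.+1).+2 - j.+2 = (j + 2 * k + 2).+2)%N by lia.
    have -> : (2 * (j + k.+1).+1 - j.+2 = (j + 2 * k + 2))%N by lia.
    have -> : (2 * (j + k.+1) - j = (j + 2 * k + 2))%N by lia.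
    have -> : ((j + k.+1).+2 - j.+2 = k.+1)%N by lia.
    have -> : ((j + k.+1).+1 - j.+2 = k)%N by lia.
    have -> : ((j + k.+1) - j = k.+1)%N by lia.
    rewrite !factS !natrM !natS_C ?natrD ?natrM. field. nz.
  + rewrite (_ : (j.+2 < n.+3)%N = false); last by lia.
    rewrite (_ : (j.+2 < n.+2)%N = false); last by lia.
    rewrite (_ : (j < n.+1)%N = false); last by lia.
    by rewrite mulr0 addr0.
  + subst j.
    rewrite (_ : (n.+2 < n.+3)%N = true); last by lia.
    rewrite (_ : (n.+2 < n.+2)%N = false); last by lia.
    rewrite (_ : (n < n.+1)%N = true); last by lia.
    rewrite !subnn.
    have -> : (2 * n.+2 - n.+2 = n.+2)%N by lia.
    have -> : (2 * n - n = n)%N by lia.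
    rewrite mulr0 add0r !mulr1 !divff //; apply: F_neq0.
Qed.

Lemma Pm0 : Pm R 0 = 1.
Proof.
apply/polyP => j; rewrite coef_poly coef1; case: j => [|j] //=.
  rewrite /q /pade_coef muln0 !subn0 fact0 mulr1n mulr1. exact: divr1.
Qed.

Lemma Pm1 : Pm R 1 = 2%:R%:P + 'X.
Proof.
apply/polyP => j; rewrite coef_poly coefD coefX coefC; case: j => [|[|j]] //=.
- rewrite /q /pade_coef /= !subn0 muln1 fact0.
  rewrite (_ : 2`! = 2)%N // (_ : 1`! = 1)%N //.
  apply/eqP; rewrite addr0 mulr1 divr1 //.
- rewrite /q /pade_coef /= muln1 subnn fact0 subn1 /= (_ : 1`! = 1)%N //.
  apply/eqP; rewrite add0r mulr1 divr1 //.
- by apply/eqP; rewrite addr0.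
Qed.

Lemma Pm_at0 n : (Pm R n).[0] != 0.
Proof.
rewrite horner_coef0 coef_poly /= /q /pade_coef.
by rewrite mulf_neq0 ?invr_eq0 ?mulf_neq0 ?F_neq0.
Qed.

Lemma stab n w : 0 <= cRe w -> w != 0 ->
  (Pm R n).[w] != 0 /\ 0 < cRe ((Pm R n.+1).[w] / (w * (Pm R n).[w])).
Proof.
move=> hw w0; elim: n => [|n [IH1 IH2]].
- rewrite Pm0 Pm1 !hornerE; split; first exact: oner_neq0.
  have -> : (2 + w) / w = 2%:R * w^-1 + 1 by field.
  rewrite raddfD /= Re_natM.
  have := ReV_ge0 _ hw. move=> h. rewrite /=. lra.
- have f0 : (Pm R n.+1).[w] / (w * (Pm R n).[w]) != 0.
    by apply/eqP => e; move: IH2; rewrite e /= ltxx.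
  have P1 : (Pm R n.+1).[w] != 0.
    by apply/eqP => e; move: f0; rewrite e mul0r eqxx.
  split => //.
  set f := (Pm R n.+1).[w] / (w * (Pm R n).[w]).
  have -> : (Pm R n.+2).[w] / (w * (Pm R n.+1).[w]) = (2 * (2 * n + 3))%:R * w^-1 + f^-1.
    rewrite /f pade_rec !hornerE. field. by rewrite w0 P1 IH1.
  rewrite raddfD /= Re_natM.
  have := ReV_ge0 _ hw; have := ReV_gt0 _ IH2.
  have : (0 : R) <= (2 * (2 * n + 3))%:R by [].
  move=> h1 h2 h3. nra.
Qed.

Lemma noroot n w : 0 <= cRe w -> (Pm R n).[w] != 0.
Proof.
move=> hw; have [->|w0] := eqVneq w 0; first exact: Pm_at0.
by case: (stab n _ hw w0).
Qed.

Lemma Pm_conj n w : conjc ((Pm R n).[w]) = (Pm R n).[conjc w].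
Proof.
have hm : map_poly conjc (Pm R n) = Pm R n.
  apply/polyP => j; rewrite coef_map /= !coef_poly; case: ifP => _; last exact: conjc0.
  by rewrite /q /pade_coef fmorph_div rmorphM /= !conjc_nat.
by rewrite -[in RHS]hm horner_map.
Qed.

Lemma n2_conj u : n2 (conjc u) = n2 u.
Proof. case: u => a b; rewrite /n2 /=; ring. Qed.

Lemma n2_1 : n2 1 = 1.
Proof. rewrite /n2 /=; ring. Qed.

Lemma n2_neq0 (u : C) : u != 0 -> 0 < n2 u.
Proof.
case: u => a b; rewrite eq_complex /= negb_and => hab.
rewrite lt_neqAle n2_ge0 andbT eq_sym; apply/negP => /eqP h.
have : (a ^+ 2 == 0) && (b ^+ 2 == 0).
  by rewrite -paddr_eq0 ?sqr_ge0 //; apply/eqP; rewrite -h.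
by rewrite !sqrf_eq0 => /andP[/eqP a0 /eqP b0]; move: hab; rewrite a0 b0 !eqxx.
Qed.

Lemma n2_prod (s : seq C) (f : C -> C) :
  n2 (\prod_(r <- s) f r) = \prod_(r <- s) n2 (f r).
Proof.
elim: s => [|x s IH]; first by rewrite !big_nil n2_1.
by rewrite !big_cons n2M IH.
Qed.

Lemma prod_lt (s : seq C) (a b : C -> R) :
  (forall r, r \in s -> 0 <= a r < b r) ->
  [/\ 0 <= \prod_(r <- s) a r <= \prod_(r <- s) b r, 0 < \prod_(r <- s) b r &
    (s != [::] -> \prod_(r <- s) a r < \prod_(r <- s) b r)].
Proof.
elim: s => [|x s IH] H.
  by rewrite !big_nil; split => //; rewrite lexx ler01.
have /andP[hx1 hx2] := H x (mem_head _ _).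
have [/andP[h1 h2] h3 h4] : [/\ 0 <= \prod_(r <- s) a r <= \prod_(r <- s) b r, 0 < \prod_(r <- s) b r &
    (s != [::] -> \prod_(r <- s) a r < \prod_(r <- s) b r)].
  by apply: IH => r hr; apply: H; rewrite inE hr orbT.
rewrite !big_cons; split.
- apply/andP; split; nra.
- nra.
- move=> _; nra.
Qed.

Lemma factor_lt (w r : C) : 0 < cRe w -> cRe r < 0 ->
  0 <= n2 (- conjc w - r) < n2 (w - r).
Proof.
case: w => a b; case: r => c d /= ha hc; rewrite /n2 /=.
rewrite opprK; apply/andP; split; first by rewrite addr_ge0 ?sqr_ge0.
have hac : a * c < 0 by rewrite pmulr_rlt0.
nra.
Qed.

Lemma key n w : (1 <= n)%N -> 0 < cRe w -> n2 (Pm R n).[- w] < n2 (Pm R n).[w].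
Proof.
move=> hn hw.
have [rs Hrs] := closed_field_poly_normal (Pm R n).
set lc := lead_coef (Pm R n) in Hrs.
have ev x : (Pm R n).[x] = lc * \prod_(r <- rs) (x - r).
  by rewrite {1}Hrs hornerZ horner_prod; congr (_ * _); apply: eq_bigr => r _; rewrite hornerXsubC.
have lc0 : lc != 0.
  apply/eqP => e; have := Pm_at0 n; by rewrite ev e mul0r eqxx.
have roots r : r \in rs -> cRe r < 0.
  move=> hr; rewrite ltNge; apply/negP => hr0.
  have := noroot n _ hr0; rewrite ev (big_rem r hr) /= subrr mul0r mulr0 eqxx //.
have rs0 : rs != [::].
  apply/eqP => e; move: Hrs; rewrite e big_nil => Hc; have := congr1 (fun p : {poly C} => p`_1) Hc.
  rewrite /=.
  rewrite coefZ coef1 mulr0 coef_poly.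
  rewrite (_ : (1 < n.+1)%N = true); last by lia.
  rewrite /q /pade_coef => /eqP; apply/negP.
  by rewrite mulf_neq0 ?invr_eq0 ?mulf_neq0 ?F_neq0.
have -> : n2 (Pm R n).[- w] = n2 (Pm R n).[- conjc w].
  by rewrite -n2_conj Pm_conj rmorphN.
rewrite !ev !n2M !n2_prod.
have [_ _ h] := prod_lt rs (fun r => n2 (- conjc w - r)) (fun r => n2 (w - r))
  (fun r hr => factor_lt _ _ hw (roots r hr)).
have hl := n2_neq0 _ lc0.
by rewrite ltr_pM2l //; apply: h.
Qed.
End S.

Theorem proposition2 (R : realType) (m : nat) (hm : (1 <= m)%N) (t : R)
  (ht : - pi <= t <= pi) (z : R[i]) :
  Mm m t z = 0 -> Re z = 0.
Proof.
move=> hM.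
have e : (Pm R m).[z] = expi t * (Pm R m).[- z].
  by apply/eqP; rewrite -subr_eq0; apply/eqP.
have hn : @n2 R (Pm R m).[z] = @n2 R (Pm R m).[- z] by rewrite e n2M n2_expi mul1r.
rewrite ReE -ReJ_add.
suff -> : cRe z = 0 by [].
case: (ltgtP (cRe z) 0) => h //.
- have h' : 0 < cRe (- z) by rewrite raddfN /= oppr_gt0.
  have := key _ _ _ hm h'; rewrite opprK hn ltxx //.
- have := key _ _ _ hm h; rewrite hn ltxx //.
Qed.
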